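(* Let $\mathbf A$ be an algebra with a Mal'cev term $q$, let $n\ge1$, and let $\alpha_0,\dots,\alpha_{n-1}$ be congruences of $\mathbf A$. Then there exists a largest clone $\mathcal C$ on $A$ such that: $q\in\mathcal C$; every operation of $\mathcal C$ preserves each of $\alpha_0,\dots,\alpha_{n-1}$; and for every nonempty $I\subseteq\{0,\dots,n-1\}$ the commutator $[\alpha_i\mid i\in I]$ computed in $\mathbf A$ equals the commutator $[\alpha_i\mid i\in I]$ computed in the algebra $(A,\mathcal C)$. (In fact $\mathcal C$ is the clone of all polymorphisms of the relation $\Delta_{\mathbf A}(\alpha_0,\dots,\alpha_{n-1})$.)
   Context: A Mal'cev term of $\mathbf A$ is a ternary term operation $q$ with $q(x,x,y)=y=q(y,x,x)$ for all $x,y$. For a clone $\mathcal C$ on $A$, $(A,\mathcal C)$ denotes the algebra whose basic (equivalently, term) operations are those of $\mathcal C$. Higher commutator (Bulatov): for congruences $\alpha_0,\dots,\alpha_{m-1},\gamma$ of an algebra, say $\alpha_0,\dots,\alpha_{m-2}$ centralize $\alpha_{m-1}$ modulo $\gamma$ if for all tuples $\mathbf a_i,\mathbf b_i$ ($i<m$, with $\mathbf a_i\neq\mathbf b_i$ congruent modulo $\alpha_i$ coordinatewise) and every term operation $t$ such that $t(\mathbf x_0,\dots,\mathbf x_{m-2},\mathbf a_{m-1})\equiv_\gamma t(\mathbf x_0,\dots,\mathbf x_{m-2},\mathbf b_{m-1})$ for all $(\mathbf x_0,\dots,\mathbf x_{m-2})\in(\{\mathbf a_0,\mathbf b_0\}\times\dots\times\{\mathbf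 a_{m-2},\mathbf b_{m-2}\})\setminus\{(\mathbf b_0,\dots,\mathbf b_{m-2})\}$, we have $t(\mathbf b_0,\dots,\mathbf b_{m-2},\mathbf a_{m-1})\equiv_\gamma t(\mathbf b_0,\dots,\mathbf b_{m-2},\mathbf b_{m-1})$. The commutator $[\alpha_0,\dots,\alpha_{m-1}]$ is the smallest congruence $\gamma$ such that $\alpha_0,\dots,\alpha_{m-2}$ centralize $\alpha_{m-1}$ modulo $\gamma$. For $I=\{i_0<\dots<i_{k-1}\}$, $[\alpha_i\mid i\in I]$ means $[\alpha_{i_0},\dots,\alpha_{i_{k-1}}]$. For $k\ge0$, $k_{(i)}$ is the $i$-th binary digit of $k$ (least significant is $i=0$). For $a,b\in A$ and $i<n$, $\mathbf c_i^n(a,b)\in A^{2^n}$ has $k$-th coordinate $a$ if $k_{(i)}=0$ and $b$ if $k_{(i)}=1$. $\Delta_{\mathbf A}(\alpha_0,\dots,\alpha_{n-1})$ is the subuniverse of $\mathbf A^{2^n}$ generated by $\{\mathbf c_i^n(a,b): i<n,\ (a,b)\in\alpha_i\}$. *)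

(* Defs.v *)
From mathcomp Require Import all_boot.
Set Implicit Arguments. Unset Strict Implicit. Unset Printing Implicit Defensive.

Definition Op (A : Type) (n : nat) := ('I_n -> A) -> A.

Record algebra (A : Type) := Algebra {
  sym : Type;
  ar : sym -> nat;
  op : forall s : sym, Op A (ar s) }.

Inductive term (A : Type) (Al : algebra A) (n : nat) : Type :=
| Var : 'I_n -> term Al n
| App : forall s : sym Al, ('I_(ar s) -> term Al n) -> term Al n.

Fixpoint eval (A : Type) (Al : algebra A) (n : nat) (t : term Al n) (x : 'I_n -> A) : A :=
  match t with
  | Var i => x i
  | App s ts => @op A Al s (fun i => eval (ts i) x)
  end.

Definition termop (A : Type) (Al : algebra A) (n : nat) (f : Op A n) : Prop :=
  exists t : term Al n, forall x, f x = eval t x.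

Definition clone (A : Type) := forall n : nat, Op A n -> Prop.

Definition is_clone (A : Type) (C : clone A) : Prop :=
  (forall n (i : 'I_n) (f : Op A n), (forall x, f x = x i) -> C n f) /\
  (forall n k (g : Op A k) (h : 'I_k -> Op A n) (f : Op A n),
      C k g -> (forall j, C n (h j)) ->
      (forall x, f x = g (fun j => h j x)) -> C n f).

Definition clone_sub (A : Type) (D C : clone A) : Prop :=
  forall n f, D n f -> C n f.

Definition clone_alg (A : Type) (C : clone A) : algebra A :=
  @Algebra A {n : nat & {f : Op A n | C n f}} (fun s => projT1 s)
    (fun s => proj1_sig (projT2 s)).

Definition preserves (A : Type) (n : nat) (f : Op A n) (theta : A -> A -> Prop) :=
  forall x y : 'I_n -> A, (forall i, theta (x i) (y i)) -> theta (f x) (f y).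

Definition equivalence_rel (A : Type) (theta : A -> A -> Prop) :=
  (forall x, theta x x) /\ (forall x y, theta x y -> theta y x) /\
  (forall x y z, theta x y -> theta y z -> theta x z).

Definition congruence (A : Type) (Al : algebra A) (theta : A -> A -> Prop) :=
  equivalence_rel theta /\ forall s : sym Al, preserves (@op A Al s) theta.

Definition mk3 (A : Type) (x y z : A) : 'I_3 -> A :=
  fun i => match val i with 0 => x | 1 => y | _ => z end.

Definition malcev (A : Type) (Al : algebra A) (q : Op A 3) :=
  termop Al q /\ forall x y, q (mk3 x x y) = y /\ q (mk3 y x x) = y.

(* The k congruences al 0, ..., al (k-1); the last one
   (index k-1) plays the special role.  The tuples a_0,...,a_{k-1} (resp. b_i)
   are encoded as one tuple a (resp. b) of length N together with a map
   blk : 'I_N -> 'I_k assigning each variable of t to its block. *)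
Definition sel (A : Type) (N k : nat) (blk : 'I_N -> 'I_k) (a b : 'I_N -> A)
  (c : 'I_k -> bool) : 'I_N -> A :=
  fun j => if c (blk j) then b j else a j.

Definition upd (k : nat) (c : 'I_k -> bool) (v : bool) : 'I_k -> bool :=
  fun i => if val i == k.-1 then v else c i.

Definition centralizes (A : Type) (Al : algebra A) (k : nat)
  (al : 'I_k -> A -> A -> Prop) (gamma : A -> A -> Prop) : Prop :=
  forall (N : nat) (blk : 'I_N -> 'I_k) (a b : 'I_N -> A) (t : Op A N),
    termop Al t ->
    (forall j, al (blk j) (a j) (b j)) ->
    (forall i : 'I_k, ~ (forall j, blk j = i -> a j = b j)) ->
    (forall c : 'I_k -> bool,
        (exists i : 'I_k, val i != k.-1 /\ c i = false) ->
        gamma (t (sel blk a b (upd c false))) (t (sel blk a b (upd c true)))) ->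
    gamma (t (sel blk a b (upd (fun _ => true) false)))
          (t (sel blk a b (fun _ => true))).

Definition commutator (A : Type) (Al : algebra A) (k : nat)
  (al : 'I_k -> A -> A -> Prop) : A -> A -> Prop :=
  fun x y => forall gamma, congruence Al gamma -> centralizes Al al gamma -> gamma x y.

(* [al_i | i in I], indices listed increasingly *)
Definition subfam (A : Type) (n : nat) (al : 'I_n -> A -> A -> Prop)
  (I : {set 'I_n}) : 'I_#|I| -> A -> A -> Prop :=
  fun j => al (enum_val j).
Arguments subfam {A n} al I _ _ _.

Definition cvec (A : Type) (n : nat) (i : 'I_n) (a b : A) : 'I_(2 ^ n) -> A :=
  fun k => if odd (val k %/ 2 ^ val i) then b else a.

Definition Delta (A : Type) (Al : algebra A) (n : nat) (al : 'I_n -> A -> A -> Prop)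
  (w : 'I_(2 ^ n) -> A) : Prop :=
  forall S : ('I_(2 ^ n) -> A) -> Prop,
    (forall (s : sym Al) (v : 'I_(ar s) -> 'I_(2 ^ n) -> A),
        (forall i, S (v i)) -> S (fun k => @op A Al s (fun i => v i k))) ->
    (forall (i : 'I_n) (a b : A), al i a b -> S (cvec i a b)) ->
    S w.

Definition Pol (A : Type) (N : nat) (R : ('I_N -> A) -> Prop) : clone A :=
  fun k f => forall v : 'I_k -> 'I_N -> A, (forall i, R (v i)) ->
    R (fun j => f (fun i => v i j)).

Definition good_clone (A : Type) (Al : algebra A) (q : Op A 3) (n : nat)
  (al : 'I_n -> A -> A -> Prop) (C : clone A) : Prop :=
  [/\ is_clone C, C 3 q,
      (forall k f, C k f -> forall i, preserves f (al i)) &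
      (forall I : {set 'I_n}, I != set0 -> forall x y,
          commutator Al (subfam al I) x y <->
          commutator (clone_alg C) (subfam al I) x y)].

(* Main.v *)
Require Import Defs.
From mathcomp Require Import all_boot zify.
From Stdlib Require Import Lia FunctionalExtensionality Classical.
Set Implicit Arguments. Unset Strict Implicit. Unset Printing Implicit Defensive.

Definition ncode (n : nat) (c : nat -> bool) := \sum_(i < n) c i * 2 ^ i.
Lemma ncodeS n c : ncode n.+1 c = c 0 + 2 * ncode n (fun i => c i.+1).
Proof.
rewrite /ncode big_ord_recl /= expn0 muln1; congr (_ + _).
rewrite big_distrr /=; apply: eq_bigr => i _; rewrite expnS mulnCA //.
Qed.
Lemma ncode_lt n c : ncode n c < 2 ^ n.
Proof.
elim: n c => [|n IH] c; first by rewrite /ncode big_ord0.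
rewrite ncodeS expnS; have := IH (fun i => c i.+1).
case: (c 0) => /=; lia.
Qed.
Lemma ncode_bit n c i : i < n -> odd (ncode n c %/ 2 ^ i) = c i.
Proof.
elim: n c i => [|n IH] c i //= Hi.
rewrite ncodeS; case: i Hi => [|i] Hi.
  by rewrite expn0 divn1 oddD oddM /=; case: (c 0).
rewrite expnS divnMA.
have -> : (c 0 + 2 * ncode n (fun i => c i.+1)) %/ 2 = ncode n (fun i => c i.+1).
  by case: (c 0) => /=; [rewrite addnC mulnC divnMDl // addn0 | rewrite add0n mulKn].
by apply: IH.
Qed.
Lemma ncode_bits n p : p < 2 ^ n -> ncode n (fun i => odd (p %/ 2 ^ i)) = p.
Proof.
elim: n p => [|n IH] p Hp.
  by rewrite /ncode big_ord0; move: Hp; rewrite expn0; case: p.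
rewrite ncodeS expn0 divn1.
have -> : ncode n (fun i => odd (p %/ 2 ^ i.+1)) = ncode n (fun i => odd (p./2 %/ 2 ^ i)).
  by rewrite /ncode; apply: eq_bigr => i _; rewrite expnS divnMA divn2.
rewrite IH; first by rewrite mul2n -[X in _ = X]odd_double_half.
by move: Hp; rewrite expnS -divn2; move=> Hp; rewrite ltn_divLR // mulnC.
Qed.

Definition bit (p i : nat) : bool := odd (p %/ 2 ^ i).

Section Code.
Variable n : nat.
Definition extc (c : 'I_n -> bool) (i : nat) : bool :=
  if insub i is Some j then c j else false.
Lemma extc_val c (j : 'I_n) : extc c j = c j.
Proof. by rewrite /extc valK. Qed.
Definition code (c : 'I_n -> bool) : 'I_(2 ^ n) := Ordinal (ncode_lt n (extc c)).
Lemma bit_code c (i : 'I_n) : bit (code c) i = c i.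
Proof. by rewrite /bit /= ncode_bit // extc_val. Qed.
Lemma code_eq c c' : (forall i, c i = c' i) -> code c = code c'.
Proof.
move=> H; apply: val_inj => /=; rewrite /ncode; apply: eq_bigr => i _.
by rewrite !extc_val H.
Qed.
Lemma code_bit (p : 'I_(2 ^ n)) : code (fun i => bit p i) = p.
Proof.
apply: val_inj => /=; rewrite -[X in _ = X](ncode_bits (ltn_ord p)).
by rewrite /ncode; apply: eq_bigr => i _; rewrite extc_val.
Qed.
Lemma leq_bits (p p' : 'I_(2 ^ n)) :
  (forall i : 'I_n, bit p i -> bit p' i) -> p <= p'.
Proof.
move=> H; rewrite -(code_bit p) -(code_bit p') /= /ncode.
apply: leq_sum => i _; rewrite !extc_val; move: (H i).
by case: (bit p i); case: (bit p' i) => // ->.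
Qed.
End Code.
Section Gen.
Variables (A : Type) (B : algebra A) (n : nat) (al : 'I_n -> A -> A -> Prop).
Hypothesis hn : 0 < n.
Hypothesis hcong : forall i, congruence B (al i).
Variable q : Op A 3.
Hypothesis hqt : termop B q.
Hypothesis hq1 : forall x y, q (mk3 x x y) = y.
Hypothesis hq2 : forall x y, q (mk3 y x x) = y.

Notation Dl := (Delta B al).

Lemma cvecE i (a b : A) (k : 'I_(2 ^ n)) : cvec i a b k = if bit k i then b else a.
Proof. by []. Qed.

Lemma Delta_op s (v : 'I_(ar s) -> 'I_(2 ^ n) -> A) :
  (forall i, Dl (v i)) -> Dl (fun k => @op A B s (fun i => v i k)).
Proof. move=> Hv; rewrite /Delta => S HS Hg; apply: (HS) => i; exact: (Hv i S HS Hg). Qed.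

Lemma Delta_gen i a b : al i a b -> Dl (cvec i a b).
Proof. by move=> H; rewrite /Delta => S HS Hg; apply: Hg. Qed.

Lemma eval_Delta m (t : term B m) (v : 'I_m -> 'I_(2 ^ n) -> A) :
  (forall j, Dl (v j)) -> Dl (fun k => eval t (fun j => v j k)).
Proof.
move=> Hv; elim: t => [i|s ts IH] /=; first exact: Hv.
exact: (Delta_op (v := fun i k => eval (ts i) (fun j => v j k)) IH).
Qed.

Lemma termop_Delta m (f : Op A m) (v : 'I_m -> 'I_(2 ^ n) -> A) :
  termop B f -> (forall j, Dl (v j)) -> Dl (fun k => f (fun j => v j k)).
Proof.
move=> [t Ht] Hv.
have -> : (fun k => f (fun j => v j k)) = (fun k => eval t (fun j => v j k)).
  by apply: functional_extensionality => k; rewrite Ht.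
exact: eval_Delta.
Qed.

Lemma mk3_app (u v w : 'I_(2 ^ n) -> A) k :
  (fun j => mk3 u v w j k) = mk3 (u k) (v k) (w k).
Proof.
by apply: functional_extensionality => j; rewrite /mk3; case: (val j) => [|[|?]].
Qed.

Lemma Delta_q u v w : Dl u -> Dl v -> Dl w ->
  Dl (fun k => q (mk3 (u k) (v k) (w k))).
Proof.
move=> Hu Hv Hw.
have := termop_Delta (v := mk3 u v w) hqt.
have -> : (fun k => q (fun j => mk3 u v w j k)) = (fun k => q (mk3 (u k) (v k) (w k))).
  by apply: functional_extensionality => k; rewrite mk3_app.
apply => j; rewrite /mk3; case: (val j) => [|[|?]] //.
Qed.

Lemma Delta_const x : Dl (fun _ => x).
Proof.
have -> : (fun _ : 'I_(2 ^ n) => x) = cvec (Ordinal hn) x x.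
  by apply: functional_extensionality => k; rewrite /cvec if_same.
apply: Delta_gen; have [[Hr _] _] := hcong (Ordinal hn); exact: Hr.
Qed.

Lemma al_refl i x : al i x x.
Proof. by have [[Hr _] _] := hcong i; apply: Hr. Qed.
Lemma al_sym i x y : al i x y -> al i y x.
Proof. by have [[_ [Hs _]] _] := hcong i; apply: Hs. Qed.

Lemma Delta_map (h : 'I_n -> bool -> bool) w :
  Dl w -> Dl (fun p => w (code (fun i => h i (bit p i)))).
Proof.
move=> Hw; apply: (Hw (fun w => Dl (fun p => w (code (fun i => h i (bit p i)))))).
  move=> s v Hv; exact: (Delta_op (v := fun i p => v i (code (fun i0 => h i0 (bit p i0)))) Hv).
move=> i a b Hab.
have E : (fun p : 'I_(2 ^ n) => cvec i a b (code (fun i0 => h i0 (bit p i0)))) =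
         (fun p : 'I_(2 ^ n) => if h i (bit p i) then b else a).
  by apply: functional_extensionality => p; rewrite cvecE bit_code.
rewrite E; case Ht: (h i true); case Hf: (h i false).
- have -> : (fun p : 'I_(2 ^ n) => if h i (bit p i) then b else a) = fun _ => b.
    by apply: functional_extensionality => p; case: (bit p i); rewrite ?Ht ?Hf.
  exact: Delta_const.
- have -> : (fun p : 'I_(2 ^ n) => if h i (bit p i) then b else a) = cvec i a b.
    by apply: functional_extensionality => p; rewrite cvecE; case: (bit p i); rewrite ?Ht ?Hf.
  exact: Delta_gen.
- have -> : (fun p : 'I_(2 ^ n) => if h i (bit p i) then b else a) = cvec i b a.
    by apply: functional_extensionality => p; rewrite cvecE; case: (bit p i); rewrite ?Ht ?Hf.
  by apply: Delta_gen; apply: al_sym.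
- have -> : (fun p : 'I_(2 ^ n) => if h i (bit p i) then b else a) = fun _ => a.
    by apply: functional_extensionality => p; case: (bit p i); rewrite ?Ht ?Hf.
  exact: Delta_const.
Qed.

Lemma cong_eval gam : congruence B gam ->
  forall m (t : term B m) x y, (forall j, gam (x j) (y j)) -> gam (eval t x) (eval t y).
Proof.
move=> [_ Hop] m t x y Hxy; elim: t => [i|s ts IH] /=; first exact: Hxy.
exact: Hop.
Qed.
Lemma cong_termop gam m (f : Op A m) x y : congruence B gam -> termop B f ->
  (forall j, gam (x j) (y j)) -> gam (f x) (f y).
Proof. move=> Hg [t Ht] H; rewrite !Ht; exact: cong_eval. Qed.

Definition P (I : {set 'I_n}) (x y : A) : 'I_(2 ^ n) -> A :=
  fun p => if [forall i in I, bit p i] then y else x.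
Definition theta I x y := Dl (P I x y).

Lemma P_same I x : P I x x = fun _ => x.
Proof. by apply: functional_extensionality => p; rewrite /P if_same. Qed.

Lemma theta_cong I : congruence B (theta I).
Proof.
split; first split.
- by move=> x; rewrite /theta P_same; exact: Delta_const.
split.
- move=> x y H; rewrite /theta.
  have -> : P I y x = fun p => q (mk3 x (P I x y p) y).
    by apply: functional_extensionality => p; rewrite /P; case: ifP.
  by apply: Delta_q => //; exact: Delta_const.
- move=> x y z H1 H2; rewrite /theta.
  have -> : P I x z = fun p => q (mk3 (P I x y p) y (P I y z p)).
    by apply: functional_extensionality => p; rewrite /P; case: ifP.
  by apply: Delta_q => //; exact: Delta_const.
- move=> s x y H; rewrite /theta.
  have -> : P I (@op A B s x) (@op A B s y) = fun p => @op A B s (fun j => P I (x j) (y j) p).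
    by apply: functional_extensionality => p; rewrite /P; case: ifP.
  exact: (Delta_op (v := fun j => P I (x j) (y j)) H).
Qed.

Lemma theta_refl I x : theta I x x.
Proof. by have [[H _] _] := theta_cong I; apply: H. Qed.

Lemma forall_in_eq (I : {set 'I_n}) (f g : 'I_n -> bool) :
  (forall i, i \in I -> f i = g i) -> [forall i in I, f i] = [forall i in I, g i].
Proof.
move=> H; apply/forall_inP/forall_inP => H' i Hi.
  by rewrite -H // H'.
by rewrite H // H'.
Qed.

Lemma theta_E I x y (p0 : 'I_(2 ^ n)) : theta I x y ->
  Dl (fun p => if [forall i in I, bit p i == bit p0 i] then y else x).
Proof.
move=> H; have := Delta_map (fun i b => if i \in I then b == bit p0 i else b) H.
congr Dl; apply: functional_extensionality => p; rewrite /P.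
congr (if _ then _ else _); apply: forall_in_eq => i Hi.
by rewrite bit_code Hi.
Qed.

Definition invariant (I : {set 'I_n}) (w : 'I_(2 ^ n) -> A) :=
  forall p p' : 'I_(2 ^ n), (forall i, i \in I -> bit p i = bit p' i) -> w p = w p'.

Lemma modify I w z : Dl w -> invariant I w -> invariant I z ->
  (forall p, theta I (w p) (z p)) -> Dl z.
Proof.
move=> Hw Iw Iz Hwz.
suff: forall m, m <= 2 ^ n -> exists w', [/\ Dl w', invariant I w',
  forall p, theta I (w' p) (z p) & forall p : 'I_(2 ^ n), p < m -> w' p = z p].
  move=> /(_ (2 ^ n) (leqnn _)) [w' [H1 _ _ H4]].
  have <- // : w' = z by apply: functional_extensionality => p; apply: H4.
elim=> [|m IH] Hm; first by exists w; split.
have [w' [H1 H2 H3 H4]] := IH (ltnW Hm).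
pose p0 := Ordinal Hm.
pose x := w' p0; pose y := z p0.
pose E := fun p : 'I_(2 ^ n) => if [forall i in I, bit p i == bit p0 i] then y else x.
have HE : Dl E by apply: theta_E; exact: H3.
have inc : forall p : 'I_(2 ^ n), [forall i in I, bit p i == bit p0 i] ->
    forall i, i \in I -> bit p i = bit p0 i.
  by move=> p /forall_inP H i Hi; apply/eqP; apply: H.
exists (fun p => q (mk3 (w' p) x (E p))); split.
- by apply: Delta_q => //; exact: Delta_const.
- move=> p p' Hpp'.
  rewrite (H2 p p' Hpp') /E (forall_in_eq (g := fun i => bit p' i == bit p0 i)) //.
  by move=> i Hi; rewrite Hpp'.
- move=> p; rewrite /E; case: ifP => Hc.
    rewrite /x (H2 p p0 (inc p Hc)) hq1 /y (Iz p p0 (inc p Hc)); exact: theta_refl.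
  by rewrite hq2.
- move=> p Hp; rewrite /E; case: ifP => Hc.
    by rewrite /x (H2 p p0 (inc p Hc)) hq1 /y (Iz p p0 (inc p Hc)).
  rewrite hq2; apply: H4; rewrite ltn_neqAle -ltnS Hp andbT.
  apply/negP => /eqP Hpp; move/negP: Hc; apply; apply/forall_inP => i _.
  by have -> : p = p0 by apply: val_inj.
Qed.

Lemma key (u w : 'I_(2 ^ n) -> A) (k : 'I_(2 ^ n)) : Dl u -> Dl w ->
  (forall j : 'I_(2 ^ n), j != k -> (forall i : 'I_n, bit j i -> bit k i) -> u j = w j) ->
  theta [set i : 'I_n | bit k i] (u k) (w k).
Proof.
move=> Hu Hw Hag.
have Hz : Dl (fun p => q (mk3 (w p) (u p) (u k))).
  by apply: Delta_q => //; exact: Delta_const.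
have := Delta_map (fun i b => b && bit k i) Hz.
rewrite /theta; congr Dl; apply: functional_extensionality => p; rewrite /P.
case: ifP => Hc.
  have -> : code (fun i => bit p i && bit k i) = k.
    rewrite -[RHS]code_bit; apply: code_eq => i.
    case Hk: (bit k i); rewrite ?andbF ?andbT //.
    by move/forall_inP: Hc; apply; rewrite inE.
  by rewrite hq2.
set j := code _.
have -> : u j = w j.
  apply: Hag.
    apply/negP => /eqP Hj; move/negP: Hc; apply; apply/forall_inP => i.
    rewrite inE => Hki; have := bit_code (fun i => bit p i && bit k i) i.
    by rewrite -/j Hj Hki andbT => <-.
  by move=> i; rewrite bit_code => /andP [].
by rewrite hq1.
Qed.

Section Cent.
Variable I : {set 'I_n}.
Hypothesis HI : I != set0.

Lemma cardI_gt0 : 0 < #|I|.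
Proof. by rewrite card_gt0. Qed.
Lemma r0_lt : #|I|.-1 < #|I|.
Proof. by rewrite ltn_predL cardI_gt0. Qed.
Definition r0 : 'I_#|I| := Ordinal r0_lt.

Lemma forall_enum (p : 'I_(2 ^ n)) :
  [forall i in I, bit p i] = [forall r : 'I_#|I|, bit p (enum_val r)].
Proof.
have [i0 Hi0] := set0Pn _ HI.
apply/forall_inP/forallP => H.
  by move=> r; apply: H; exact: enum_valP.
by move=> i Hi; rewrite -(enum_rankK_in Hi0 Hi); apply: H.
Qed.

Lemma theta_cent : centralizes B (subfam al I) (theta I).
Proof.
move=> N blk a b t Ht Hal _ Hc.
pose cp (p : 'I_(2 ^ n)) : 'I_#|I| -> bool := fun r => bit p (enum_val r).
pose T p := t (sel blk a b (cp p)).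
pose D' p := t (sel blk a b (upd (cp p) false)).
have HT : Dl T.
  exact: (termop_Delta (v := fun j => cvec (enum_val (blk j)) (a j) (b j)) Ht (fun j => Delta_gen (Hal j))).
have HD : Dl D'.
  have := termop_Delta (v := fun j => if val (blk j) == #|I|.-1
      then cvec (enum_val (blk j)) (a j) (a j) else cvec (enum_val (blk j)) (a j) (b j)) Ht.
  have -> // : (fun k => t (fun j => (if val (blk j) == #|I|.-1
      then cvec (enum_val (blk j)) (a j) (a j) else cvec (enum_val (blk j)) (a j) (b j)) k)) = D'.
    apply: functional_extensionality => p; rewrite /D'; congr t.
    apply: functional_extensionality => j; rewrite /sel /upd.
    by case: (val (blk j) == #|I|.-1); rewrite /cvec ?if_same.
  apply => j; case: (val (blk j) == #|I|.-1); apply: Delta_gen; [exact: al_refl | exact: (Hal j)].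
set u := t (sel blk a b (upd (fun=> true) false)).
set v := t (sel blk a b (fun=> true)).
have sel_ext : forall c c', (forall r, c r = c' r) -> t (sel blk a b c) = t (sel blk a b c').
  move=> c c' H; congr t; apply: functional_extensionality => jj; by rewrite /sel H.
pose zh p := q (mk3 (T p) (D' p) u).
have Hzh : Dl zh by apply: (Delta_q HT HD); exact: Delta_const.
have cp_inv : forall p p' : 'I_(2 ^ n), (forall i, i \in I -> bit p i = bit p' i) ->
    forall r, cp p r = cp p' r.
  by move=> p p' H r; rewrite /cp H //; exact: enum_valP.
apply: (modify (I := I) Hzh).
- move=> p p' H; rewrite /zh /T /D' (sel_ext _ _ (cp_inv _ _ H)).
  by rewrite (sel_ext (upd (cp p) false) (upd (cp p') false)) // => r; rewrite /upd (cp_inv p p' H).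
- move=> p p' H; rewrite /P (forall_in_eq (g := fun i => bit p' i)) //.
- move=> p; rewrite /P.
  case Hl: (cp p r0).
    case: (boolP [forall i in I, bit p i]) => Hall0.
      have Hall : forall r, cp p r by apply/forallP; rewrite -forall_enum.
      rewrite /zh /T /D' (sel_ext (cp p) (fun=> true)); last by move=> r; apply: Hall.
      rewrite (sel_ext (upd (cp p) false) (upd (fun=> true) false)) ?hq2; first exact: theta_refl.
      by move=> r; rewrite /upd; case: ifP => // _; apply: Hall.
    have Hall : ~ (forall r, cp p r).
      by move=> H; move/negP: Hall0; apply; rewrite forall_enum; apply/forallP.
    have [r Hr] : exists r, cp p r = false.
      apply: not_all_not_ex => H; apply: Hall => r; move: (H r).
      by rewrite /cp; case: (bit p (enum_val r)).
    have Hr0 : val r != #|I|.-1.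
      apply/negP => /eqP E; have : r = r0 by apply: val_inj.
      by move=> E'; move: Hr; rewrite E' Hl.
    have H1 := Hc (cp p) (ex_intro _ r (conj Hr0 Hr)).
    rewrite (sel_ext (upd (cp p) true) (cp p)) in H1; last first.
      by move=> r'; rewrite /upd; case: ifP => // /eqP E; rewrite -Hl; congr cp; apply: val_inj.
    have [[_ [Hs Htr]] _] := theta_cong I.
    apply: (Htr _ (q (mk3 (D' p) (D' p) u))); last by rewrite hq1; exact: theta_refl.
    apply: (cong_termop (theta_cong I) hqt) => j.
    rewrite /mk3; case: (val j) => [|[|?]]; last exact: theta_refl.
      by apply: Hs.
    exact: theta_refl.
  have -> : [forall i in I, bit p i] = false.
    by rewrite forall_enum; apply/forallP => H; move: (H r0); rewrite -/(cp p r0) Hl.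
  rewrite /zh /D' (sel_ext (upd (cp p) false) (cp p)) ?hq1; first exact: theta_refl.
  by move=> r; rewrite /upd; case: ifP => // /eqP E; rewrite -Hl; congr cp; apply: val_inj.
Qed.
End Cent.

Fixpoint rename N M (f : 'I_N -> 'I_M) (t : term B N) : term B M :=
  match t with
  | Var i => Var B (f i)
  | App s ts => App (fun i => rename f (ts i))
  end.

Lemma eval_rename N M (f : 'I_N -> 'I_M) (t : term B N) x :
  eval (rename f t) x = eval t (fun j => x (f j)).
Proof.
elim: t => [i|s ts IH] //=; congr (op _); apply: functional_extensionality => i.
exact: IH.
Qed.

Definition gen N (G : 'I_N -> 'I_n * A * A) (p : 'I_(2 ^ n)) : 'I_N -> A :=
  fun j => cvec (G j).1.1 (G j).1.2 (G j).2 p.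
Definition okG N (G : 'I_N -> 'I_n * A * A) := forall j, al (G j).1.1 (G j).1.2 (G j).2.
Definition Rep (w : 'I_(2 ^ n) -> A) := exists N (G : 'I_N -> 'I_n * A * A) (t : term B N),
  okG G /\ forall p, w p = eval t (gen G p).

Lemma merge m (v : 'I_m -> 'I_(2 ^ n) -> A) : (forall i, Rep (v i)) ->
  exists N (G : 'I_N -> 'I_n * A * A) (ts : 'I_m -> term B N),
    okG G /\ forall i p, v i p = eval (ts i) (gen G p).
Proof.
elim: m v => [|m IH] v Hv.
  have G0 : 'I_0 -> 'I_n * A * A by case.
  have ts0 : 'I_0 -> term B 0 by case.
  by exists 0, G0, ts0; split; case.
have [N1 [G1 [ts1 [HG1 H1]]]] := IH (fun i => v (lift ord0 i)) (fun i => Hv _).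
have [N2 [G2 [t2 [HG2 H2]]]] := Hv ord0.
pose G (j : 'I_(N1 + N2)) := match split j with inl j1 => G1 j1 | inr j2 => G2 j2 end.
exists (N1 + N2), G.
exists (fun i => match unlift ord0 i with
                 | Some i' => rename (@lshift N1 N2) (ts1 i')
                 | None => rename (@rshift N1 N2) t2 end).
split.
  by move=> j; rewrite /G; case: (split j).
move=> i p; case: unliftP => [i'|] -> ; rewrite eval_rename.
  rewrite H1; congr eval; apply: functional_extensionality => j.
  by rewrite /gen /G -[lshift _ _]/(unsplit (inl j)) unsplitK.
rewrite H2; congr eval; apply: functional_extensionality => j.
by rewrite /gen /G -[rshift _ _]/(unsplit (inr j)) unsplitK.
Qed.

Lemma Delta_Rep w : Dl w -> Rep w.
Proof.
move=> Hw; apply: (Hw Rep).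
  move=> s v Hv; have [N [G [ts [HG H]]]] := merge Hv.
  exists N, G, (App ts); split => // p /=; congr (op _).
  by apply: functional_extensionality => i; rewrite H.
move=> i a b Hab; exists 1, (fun _ => (i, a, b)), (Var B ord0); split => //.
Qed.

Lemma comm_sub I x y : I != set0 -> theta I x y ->
  forall gam, congruence B gam -> centralizes B (subfam al I) gam -> gam x y.
Proof.
move=> HI Hxy gam Hg Hcent.
have [N [G [t [HG Ht]]]] := Delta_Rep Hxy.
have [i0 Hi0] := set0Pn _ HI.
pose rk i : 'I_#|I| := enum_rank_in Hi0 i.
pose blk j := rk (G j).1.1.
pose a' j := (G j).1.2.
pose b' j := if (G j).1.1 \in I then (G j).2 else (G j).1.2.
have grefl : forall z, gam z z by case: Hg => [[Hr _] _].
have key : forall c : 'I_#|I| -> bool,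
    eval t (sel blk a' b' c) = if [forall r, c r] then y else x.
  move=> c; pose pc := code (fun i => (i \in I) && c (rk i)).
  have -> : sel blk a' b' c = gen G pc.
    apply: functional_extensionality => j.
    rewrite /sel /gen cvecE bit_code /blk /a' /b'.
    by case: ((G j).1.1 \in I); case: (c _).
  rewrite -Ht /P.
  congr (if _ then _ else _).
  apply/forall_inP/forallP => H.
    move=> r; have := H (enum_val r) (enum_valP r).
    by rewrite bit_code enum_valP /rk enum_valK_in.
  by move=> i Hi; rewrite bit_code Hi H.
case: (classic (exists r, forall j, blk j = r -> a' j = b' j)) => [[r Hr]|Hnd].
  have : eval t (sel blk a' b' (fun=> true)) = eval t (sel blk a' b' (fun r' => r' != r)).
    congr eval; apply: functional_extensionality => j; rewrite /sel.
    case: eqP => [E|//] /=; exact: (esym (Hr j E)).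
  rewrite !key.
  case: forallP => [_|H]; last by case: H.
  case: forallP => [H|_]; first by move: (H r); rewrite eqxx.
  by move=> ->.
have E1 : eval t (sel blk a' b' (upd (fun=> true) false)) = x.
  rewrite key; have -> // : [forall r : 'I_#|I|, upd (fun=> true) false r] = false.
  case: forallP => // H; move: (H (r0 HI)); rewrite /upd /= eqxx //.
have E2 : eval t (sel blk a' b' (fun=> true)) = y.
  by rewrite key; case: forallP => [_|H] //; case: H.
rewrite -E1 -E2; apply: (Hcent N blk a' b' (eval t)).
- by exists t.
- move=> j; rewrite /subfam /blk /a' /b'.
  case: ifP => Hin; last exact: al_refl.
  by rewrite /rk enum_rankK_in //; apply: HG.
- by move=> r H; apply: Hnd; exists r.
- move=> c [i [Hi Hci]]; rewrite !key.
  have F : forall v, [forall r : 'I_#|I|, upd c v r] = false.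
    move=> v; case: forallP => // H; move: (H i); rewrite /upd (negbTE Hi) Hci //.
  by rewrite !F.
Qed.

Lemma comm_iff I x y : I != set0 ->
  (commutator B (subfam al I) x y <-> theta I x y).
Proof.
move=> HI; split.
  by move=> H; apply: H; [exact: theta_cong | exact: theta_cent].
by move=> H gam Hg Hc; exact: (comm_sub HI H Hg Hc).
Qed.
End Gen.

Lemma transfer A (B1 B2 : algebra A) n (al : 'I_n -> A -> A -> Prop) (hn : 0 < n)
  (hc1 : forall i, congruence B1 (al i)) (hc2 : forall i, congruence B2 (al i))
  (q : Op A 3) (ht1 : termop B1 q) (ht2 : termop B2 q)
  (hq1 : forall x y, q (mk3 x x y) = y) (hq2 : forall x y, q (mk3 y x x) = y) :
  (forall S x y, S != set0 -> Delta B1 al (P S x y) -> Delta B2 al (P S x y)) ->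
  forall w, Delta B1 al w -> Delta B2 al w.
Proof.
move=> HS w Hw.
suff: forall m, m <= 2 ^ n -> exists w', [/\ Delta B1 al w', Delta B2 al w' &
   forall p : 'I_(2 ^ n), p < m -> w' p = w p].
  move=> /(_ (2 ^ n) (leqnn _)) [w' [_ H2 H3]].
  have <- // : w' = w by apply: functional_extensionality => p; apply: H3.
have p00 : 0 < 2 ^ n by rewrite expn_gt0.
elim=> [|m IH] Hm.
  exists (fun _ => w (Ordinal p00)).
  by split; [exact: Delta_const | exact: Delta_const | by []].
have [w' [H1 H2 H3]] := IH (ltnW Hm).
pose k := Ordinal Hm.
pose S := [set i : 'I_n | bit k i].
have Hk : Delta B1 al (P S (w' k) (w k)).
  apply: (key hn hc1 ht1 hq1 hq2 H1 Hw) => j Hjk Hb.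
  apply: H3; rewrite ltn_neqAle.
  have -> : nat_of_ord j != m by apply/eqP => E; move/eqP: Hjk; apply; exact: val_inj.
  exact: (leq_bits Hb).
have Hk2 : Delta B2 al (P S (w' k) (w k)).
  case: (boolP (S == set0)) => [/eqP E|HS0]; last exact: HS.
  rewrite E.
  have -> : P (set0 : {set 'I_n}) (w' k) (w k) = fun _ : 'I_(2 ^ n) => w k.
    apply: functional_extensionality => p; rewrite /P.
    by have -> : [forall i in (set0 : {set 'I_n}), bit p i] by apply/forall_inP => i; rewrite in_set0.
  exact: Delta_const.
exists (fun p => q (mk3 (w' p) (w' k) (P S (w' k) (w k) p))); split.
- by apply: (Delta_q ht1) => //; exact: Delta_const.
- by apply: (Delta_q ht2) => //; exact: Delta_const.
- move=> p Hp; rewrite /P; case: ifP => Hc.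
    have Epk : p = k.
      apply: val_inj; apply/eqP; rewrite eqn_leq -ltnS Hp /=.
      apply: (leq_bits (p := k)) => i Hi; move/forall_inP: Hc; apply; by rewrite inE.
    by rewrite Epk hq1.
  rewrite hq2; apply: H3; rewrite ltn_neqAle -ltnS Hp andbT.
  apply/negP => /eqP Epk; move/negP: Hc; apply; apply/forall_inP => i.
  rewrite inE; have -> // : p = k by apply: val_inj.
Qed.

Theorem mainTheorem2 (A : Type) (Al : algebra A) (q : Op A 3) (hq : malcev Al q)
  (n : nat) (hn : 1 <= n) (al : 'I_n -> A -> A -> Prop)
  (hal : forall i, congruence Al (al i)) :
  good_clone Al q al (Pol (Delta Al al)) /\
  (forall D : clone A, good_clone Al q al D -> clone_sub D (Pol (Delta Al al))).
Proof.
have [Hqt Hqid] := hq.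
have hq1 : forall x y, q (mk3 x x y) = y by move=> x y; case: (Hqid x y).
have hq2 : forall x y, q (mk3 y x x) = y by move=> x y; case: (Hqid x y).
have calg_q : forall C : clone A, C 3 q -> termop (clone_alg C) q.
  move=> C HC.
  by exists (@App A (clone_alg C) 3 (existT (fun m => {f : Op A m | C m f}) 3 (exist _ q HC)) (fun i => Var _ i)).
have calg_cong : forall C : clone A, (forall k f, C k f -> forall i, preserves f (al i)) ->
    forall i, congruence (clone_alg C) (al i).
  move=> C HC i; split; first by case: (hal i).
  by case=> k [f Hf] /=; apply: HC.
have Pol_op : forall s : sym Al, Pol (Delta Al al) (@op A Al s).
  by move=> s v Hv; exact: (Delta_op Hv).
have face : forall i w, Delta Al al w ->
    al i (w (code (fun _ => false))) (w (code (fun i' => i' == i))).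
  move=> i w Hw; apply: (Hw (fun w => al i (w (code (fun _ => false))) (w (code (fun i' => i' == i))))).
    by move=> s v Hv; case: (hal i) => _ Hp; apply: Hp.
  move=> i' a b Hab; rewrite !cvecE !bit_code.
  case: (i' =P i) => [E|_] /=; first by rewrite -E.
  by case: (hal i) => [[Hr _] _]; apply: Hr.
have Pol_pres : forall k f, Pol (Delta Al al) (n:=k) f -> forall i, preserves f (al i).
  move=> k f Hf i x y Hxy.
  have := face i _ (Hf (fun j => cvec i (x j) (y j)) (fun j => Delta_gen (Hxy j))).
  have -> : (fun i0 => cvec i (x i0) (y i0) (code (fun _ => false))) = x.
    by apply: functional_extensionality => j; rewrite cvecE bit_code.
  have -> // : (fun i0 => cvec i (x i0) (y i0) (code (fun i' => i' == i))) = y.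
    by apply: functional_extensionality => j; rewrite cvecE bit_code eqxx.
have HPq : Pol (Delta Al al) (n:=3) q by move=> v Hv; exact: (termop_Delta Hqt Hv).
have HDeq : forall w, Delta Al al w <-> Delta (clone_alg (Pol (Delta Al al))) al w.
  move=> w; split => Hw.
    apply: Hw; last by move=> i a b Hab; exact: Delta_gen.
    move=> s v Hv.
    exact: (Delta_op (B := clone_alg _)
      (s := existT (fun m => {f : Op A m | Pol (Delta Al al) (n:=m) f}) (ar s) (exist _ (@op A Al s) (Pol_op s))) Hv).
  apply: Hw; last by move=> i a b Hab; exact: Delta_gen.
  by case=> k [f Hf] v Hv /=; exact (Hf v Hv).
split.
  split.
  - split.
      move=> m i f Hf v Hv.
      have -> : (fun j => f (fun i0 => v i0 j)) = v i.
        by apply: functional_extensionality => j; rewrite Hf.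
      exact: Hv.
    move=> m k g h f Hg Hh Hf v Hv.
    have -> : (fun j => f (fun i => v i j)) =
              (fun j => g (fun j' => h j' (fun i => v i j))).
      by apply: functional_extensionality => j; rewrite Hf.
    exact (Hg (fun j' p => h j' (fun i => v i p)) (fun j' => Hh j' v Hv)).
  - exact: HPq.
  - exact: Pol_pres.
  - move=> I HI x y.
    rewrite (comm_iff hn hal Hqt hq1 hq2 x y HI).
    rewrite (comm_iff hn (calg_cong _ Pol_pres) (calg_q _ HPq) hq1 hq2 x y HI).
    exact: HDeq.
move=> D [HDc HDq HDp HDcomm] k f Hf v Hv.
have hc2 := calg_cong D HDp.
have hqD := calg_q D HDq.
have T1 : forall w, Delta Al al w -> Delta (clone_alg D) al w.
  apply: (transfer hn hal hc2 Hqt hqD hq1 hq2) => S x y HS H.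
  have := (comm_iff hn hc2 hqD hq1 hq2 x y HS).1; apply.
  apply/HDcomm => //; exact: (comm_iff hn hal Hqt hq1 hq2 x y HS).2.
have T2 : forall w, Delta (clone_alg D) al w -> Delta Al al w.
  apply: (transfer hn hc2 hal hqD Hqt hq1 hq2) => S x y HS H.
  have := (comm_iff hn hal Hqt hq1 hq2 x y HS).1; apply.
  apply/HDcomm => //; exact: (comm_iff hn hc2 hqD hq1 hq2 x y HS).2.
apply: T2.
exact: (Delta_op (B := clone_alg D)
  (s := existT (fun m => {f : Op A m | D m f}) k (exist _ f Hf)) (v := v) (fun i => T1 _ (Hv i))).
Qed.
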